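(* Let $p\ge7$ be prime, let $L/K$ be a finite cyclic Galois extension of number fields, and let $\overline r:G_L\to\mathrm{PGL}_2(\mathbb{F}_p)$ be a continuous homomorphism with cyclotomic determinant. Then $\overline r$ extends to a homomorphism $\overline R:G_K\to\mathrm{PGL}_2(\mathbb{F}_p)$ (i.e. $\overline R|_{G_L}=\overline r$) if and only if $\overline r$ is compatible with $L/K$. Moreover, $\overline r$ admits such an extension $\overline R$ with cyclotomic determinant if and only if $\overline r$ is strongly compatible with $L/K$.
   Context: $G_K=\mathrm{Gal}(\overline{\mathbb{Q}}/K)$. Let $\overline\varepsilon_p^{\mathrm{pr}}:G_{\mathbb{Q}}\to\mathbb{F}_p^\times/\mathbb{F}_p^{\times2}$ be the mod-$p$ cyclotomic character composed with the quotient map; determinants on $\mathrm{PGL}_2(\mathbb{F}_p)$ take values in $\mathbb{F}_p^\times/\mathbb{F}_p^{\times2}$. A homomorphism $\overline\rho:G_L\to\mathrm{PGL}_2(\mathbb{F}_p)$ has cyclotomic determinant if $\det\overline\rho(\sigma)=\overline\varepsilon_p^{\mathrm{pr}}(\sigma)$ for all $\sigma$. For $K\subseteq L$, $\overline\rho$ is invariant with respect to $L/K$ if for every $\tau\in G_K$ there is $g_\tau\in\mathrm{PGL}_2(\mathbb{F}_p)$ with $\overline\rho(\tau\sigma\tau^{-1})=g_\tau\overline\rho(\sigma)g_\tau^{-1}$ for all $\sigma\in G_L$; strongly invariant if moreover the $g_\tau$ can be chosen with $\det g_\tau=\overline\varepsilon_p^{\mathrm{pr}}(\tau)$. It is (strongly)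 compatible with $L/K$ if it is (strongly) invariant with the $g_\tau$ additionally satisfying $\overline\rho(\tau^{d})=g_\tau^{d}$ for all $\tau\in G_K$, where $d=d_\tau$ is the least positive integer with $\tau^d\in G_L$. *)

(* Defs.v *)
From HB Require Import structures.
From mathcomp Require Import all_boot all_order all_algebra all_fingroup all_field.
Set Implicit Arguments. Unset Strict Implicit. Unset Printing Implicit Defensive.
Import GRing.Theory Num.Theory.
Local Open Scope ring_scope.

(* Qbar is modelled by algC (the algebraic closure of Q inside C).
   Elements of Gal(Qbar/Q) are modelled as functions algC -> algC that are
   bijective ring endomorphisms; subsets of algC are Prop-valued predicates. *)

Definition is_subfield (K : algC -> Prop) : Prop :=
  [/\ K 0 /\ K 1,
      (forall x y, K x -> K y -> K (x + y)),
      (forall x, K x -> K (- x)),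
      (forall x y, K x -> K y -> K (x * y)) &
      (forall x, K x -> x != 0 -> K x^-1)].

Definition number_field (K : algC -> Prop) : Prop :=
  is_subfield K /\
  exists (n : nat) (b : 'I_n -> algC), (forall i, K (b i)) /\
    forall x, K x -> exists c : 'I_n -> rat, x = \sum_(i < n) ratr (c i) * b i.

Definition absGal (K : algC -> Prop) (s : algC -> algC) : Prop :=
  [/\ bijective s,
      (forall x y, s (x + y) = s x + s y),
      (forall x y, s (x * y) = s x * s y),
      s 1 = 1 &
      (forall x, K x -> s x = x)].

Definition powf (t : algC -> algC) (d : nat) : algC -> algC :=
  iter d (fun f => t \o f) id.

Definition cyclic_galois_ext (K L : algC -> Prop) : Prop :=
  [/\ number_field K, number_field L,
      (forall x, K x -> L x),
      (* normal (separability is automatic in characteristic 0) *)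
      (forall t x, absGal K t -> L x -> L (t x)) &
      (exists2 t0, absGal K t0 &
         forall t, absGal K t -> exists k, forall x, L x -> t x = powf t0 k x)].

Definition scalGL (p : nat) : {set {'GL_2['F_p]}} :=
  [set g : {'GL_2['F_p]} | is_scalar_mx (GLval g)].

Definition PGL2 (p : nat) : finGroupType := coset_of (scalGL p).

(* sigma acts on the p-th roots of unity by z |-> z^k, i.e. the mod-p
   cyclotomic character of sigma is k mod p *)
Definition cyc_exp (p : nat) (s : algC -> algC) (k : nat) : Prop :=
  forall z : algC, p.-primitive_root z -> s z = z ^+ k.

(* det x = eps_p^pr(sigma) in F_p^x / (F_p^x)^2 *)
Definition det_is_cyc (p : nat) (x : PGL2 p) (s : algC -> algC) : Prop :=
  exists (g : {'GL_2['F_p]}) (k : nat) (c : 'F_p),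
    [/\ coset (scalGL p) g = x, cyc_exp p s k &
        \det (GLval g) = k%:R * c ^+ 2].

(* continuous homomorphism G_L -> PGL_2(F_p) (discrete target, Krull topology:
   the kernel contains the pointwise stabiliser of a finite set) *)
Definition is_hom (p : nat) (L : algC -> Prop) (r : (algC -> algC) -> PGL2 p) : Prop :=
  forall s t, absGal L s -> absGal L t -> r (s \o t) = (r s * r t)%g.

Definition is_cont (p : nat) (L : algC -> Prop) (r : (algC -> algC) -> PGL2 p) : Prop :=
  exists S : seq algC, forall s t, absGal L s -> absGal L t ->
    (forall x, x \in S -> s x = t x) -> r s = r t.

Definition cyclotomic_det (p : nat) (L : algC -> Prop)
    (r : (algC -> algC) -> PGL2 p) : Prop :=
  forall s, absGal L s -> det_is_cyc (r s) s.

Definition conj_by (p : nat) (L : algC -> Prop) (r : (algC -> algC) -> PGL2 p)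
    (t : algC -> algC) (g : PGL2 p) : Prop :=
  forall s s', absGal L s -> absGal L s' ->
    (forall x, s' (t x) = t (s x)) -> r s' = (g * r s * g^-1)%g.

Definition order_mod (L : algC -> Prop) (t : algC -> algC) (d : nat) : Prop :=
  [/\ (0 < d)%N, absGal L (powf t d) &
      forall d', (0 < d')%N -> (d' < d)%N -> ~ absGal L (powf t d')].

Definition power_cond (p : nat) (L : algC -> Prop) (r : (algC -> algC) -> PGL2 p)
    (t : algC -> algC) (g : PGL2 p) : Prop :=
  forall d, order_mod L t d -> r (powf t d) = (g ^+ d)%g.

Definition compatible (p : nat) (K L : algC -> Prop)
    (r : (algC -> algC) -> PGL2 p) : Prop :=
  forall t, absGal K t -> exists g : PGL2 p, conj_by L r t g /\ power_cond L r t g.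

Definition strongly_compatible (p : nat) (K L : algC -> Prop)
    (r : (algC -> algC) -> PGL2 p) : Prop :=
  forall t, absGal K t -> exists g : PGL2 p,
    [/\ conj_by L r t g, det_is_cyc g t & power_cond L r t g].

(* Main.v *)
Require Import Defs.
From HB Require Import structures.
From mathcomp Require Import all_boot all_order all_algebra all_fingroup all_field.
From Stdlib Require Import FunctionalExtensionality ClassicalEpsilon Classical.
Set Implicit Arguments. Unset Strict Implicit. Unset Printing Implicit Defensive.

Section RH.
Import GRing.Theory Num.Theory.
Local Open Scope ring_scope.

Lemma absGal_sub (K K' : algC -> Prop) s : (forall x, K' x -> K x) -> absGal K s -> absGal K' s.
Proof. by move=> H [? ? ? ? F]; split => // x /H /F. Qed.

Lemma absGal_fix (K K' : algC -> Prop) s : absGal K s -> (forall x, K' x -> s x = x) -> absGal K' s.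
Proof. by move=> [? ? ? ? F]; split. Qed.

Lemma absGal_comp K s t : absGal K s -> absGal K t -> absGal K (s \o t).
Proof.
move=> [bs ads ms os fs] [bt ad mt ot ft]; split => /=.
- exact: bij_comp.
- by move=> x y; rewrite ad ads.
- by move=> x y; rewrite mt ms.
- by rewrite ot os.
- by move=> x Kx; rewrite ft // fs.
Qed.

Lemma absGal_inv K s si : absGal K s -> cancel s si -> cancel si s -> absGal K si.
Proof.
move=> [bs ads ms os fs] c1 c2; split.
- by exists s.
- by move=> x y; apply: (can_inj c1); rewrite c2 ads !c2.
- by move=> x y; apply: (can_inj c1); rewrite c2 ms !c2.
- by apply: (can_inj c1); rewrite c2 os.
- by move=> x Kx; apply: (can_inj c1); rewrite c2 fs.
Qed.

Lemma absGal_id K : absGal K id.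
Proof. by split => //; exists id. Qed.

Lemma powfS t k : powf t k.+1 = t \o powf t k.
Proof. by []. Qed.

Lemma powfD t a b x : powf t (a + b) x = powf t a (powf t b x).
Proof. by elim: a => //= a IH; rewrite IH. Qed.

Lemma powfSr t k x : powf t k.+1 x = powf t k (t x).
Proof. by rewrite -addn1 powfD. Qed.

Lemma powf_abs K t k : absGal K t -> absGal K (powf t k).
Proof. by move=> Ht; elim: k => [|k IH]; [exact: absGal_id | exact: absGal_comp]. Qed.

Lemma powf_can t ti k : cancel t ti -> cancel (powf t k) (powf ti k).
Proof. by move=> c; elim: k => // k IH x; rewrite powfSr [powf t _ x]/= c IH. Qed.

Section Hom.
Variables (K : algC -> Prop) (s : algC -> algC).
Hypothesis Hs : absGal K s.

Lemma rh0 : s 0 = 0.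
Proof. case: Hs => _ a _ _ _; apply: (@addrI _ (s 0)); by rewrite -a !addr0. Qed.

Lemma rhN x : s (- x) = - s x.
Proof. case: Hs => _ a _ _ _; apply: (@addrI _ (s x)); by rewrite -a !subrr rh0. Qed.

Lemma rhn n : s n%:R = n%:R.
Proof.
case: Hs => _ a _ o _; elim: n => [|n IH]; first by rewrite rh0.
by rewrite -addn1 natrD a IH o.
Qed.

Lemma rhz z : s z%:~R = z%:~R.
Proof. by case: z => n; rewrite ?NegzE ?rmorphN /= ?rhN rhn. Qed.

Lemma rhV x : s x^-1 = (s x)^-1.
Proof.
case: Hs => _ a m o _.
have [->|x0] := eqVneq x 0; first by rewrite invr0 rh0 invr0.
have e : s x * s x^-1 = 1 by rewrite -m mulfV.
have sx0 : s x != 0 by apply/eqP => h; move: e; rewrite h mul0r => /eqP; rewrite eq_sym oner_eq0.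
by apply: (mulfI sx0); rewrite e mulfV.
Qed.

Lemma rhrat q : s (ratr q) = ratr q.
Proof. case: Hs => _ a m o _; by rewrite /ratr m rhV !rhz. Qed.

Lemma rhX x n : s (x ^+ n) = s x ^+ n.
Proof. case: Hs => _ a m o _; elim: n => [|n IH]; by rewrite ?expr0 ?o // !exprS m IH. Qed.

Lemma rhsum n (F : 'I_n -> algC) : s (\sum_(i < n) F i) = \sum_(i < n) s (F i).
Proof. case: Hs => _ a m o _; exact: (big_morph s a rh0). Qed.
End Hom.
End RH.

Section D.
Import GRing.Theory Num.Theory.
Variable p : nat.

Lemma scal_norm (y : {'GL_2['F_p]}) : y \in ('N(scalGL p))%g.
Proof.
rewrite inE; apply/subsetP => z; rewrite mem_conjg !inE.
case/is_scalar_mxP => a Ha; apply/is_scalar_mxP; exists a.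
rewrite -(conjgKV y z); move: (z ^ y^-1)%g Ha => w Hw.
rewrite /conjg !GL_MxE Hw GL_VxE mul_scalar_mx -scalemxAr mulVmx ?GL_unitmx // scalemx1.
by apply/matrixP => i j; rewrite !mxE.
Qed.

Lemma det_mul (K : algC -> Prop) (x y : PGL2 p) t s :
  absGal K t -> det_is_cyc x t -> det_is_cyc y s -> det_is_cyc (x * y)%g (t \o s).
Proof.
move=> Ht [h [k [c [hx ck dh]]]] [h' [k' [c' [hy ck' dh']]]].
exists (h * h')%g, (k * k')%N, (c * c')%R.
split.
- by rewrite coset_morphM ?scal_norm // hx hy.
- move=> z pz /=; by rewrite ck' // (rhX Ht) ck // -exprM.
- by rewrite GL_MxE det_mulmx dh dh' natrM exprMn mulrACA.
Qed.

Lemma det_one : det_is_cyc (1%g : PGL2 p) id.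
Proof.
exists 1%g, 1%N, 1%R; split => //.
- by rewrite morph1.
- by rewrite GL_1E det1 expr1n mulr1.
Qed.
End D.

Section Main.
Variables (p : nat) (K L : algC -> Prop) (r : (algC -> algC) -> PGL2 p)
  (t0 t0i : algC -> algC) (g : PGL2 p).
Hypothesis rhom : is_hom L r.
Hypothesis HKL : forall x, K x -> L x.
Hypothesis Hnorm : forall t x, absGal K t -> L x -> L (t x).
Hypothesis Ht0 : absGal K t0.
Hypothesis c1 : cancel t0 t0i.
Hypothesis c2 : cancel t0i t0.
Hypothesis Hgen : forall t, absGal K t -> exists k, forall x, L x -> t x = powf t0 k x.
Hypothesis Hconj : conj_by L r t0 g.
Hypothesis Hpow : power_cond L r t0 g.

Lemma t0i_abs : absGal K t0i.
Proof. exact: absGal_inv Ht0 c1 c2. Qed.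

Lemma r_id : r id = 1%g.
Proof.
have H := rhom (absGal_id L) (absGal_id L).
by apply: (mulgI (r id)); rewrite mulg1 -H.
Qed.

Lemma pure_abs (M : algC -> Prop) s : absGal M s -> absGal (fun _ => False) s.
Proof. by apply: absGal_sub. Qed.

Lemma absL_qd d q : absGal L (powf t0 d) -> absGal L (powf t0 (q * d)).
Proof.
move=> Hd; elim: q => [|q IH]; first exact: absGal_id.
have -> : powf t0 (q.+1 * d) = powf t0 d \o powf t0 (q * d).
  by apply: functional_extensionality => x; rewrite mulSn powfD.
exact: absGal_comp.
Qed.

Lemma r_qd d q : absGal L (powf t0 d) -> r (powf t0 (q * d)) = (r (powf t0 d) ^+ q)%g.
Proof.
move=> Hd; elim: q => [|q IH]; first by rewrite expg0 r_id.
have -> : powf t0 (q.+1 * d) = powf t0 d \o powf t0 (q * d).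
  by apply: functional_extensionality => x; rewrite mulSn powfD.
rewrite rhom //; last exact: absL_qd. by rewrite IH expgS.
Qed.

Lemma exists_order m : (0 < m)%N -> absGal L (powf t0 m) -> exists d, order_mod L t0 d.
Proof.
elim/ltn_ind: m => m IH m0 Hm.
case: (classic (exists d', [/\ (0 < d')%N, (d' < m)%N & absGal L (powf t0 d')])).
  by case=> d' [h1 h2 h3]; exact: (IH d').
move=> N; exists m; split => // d' h1 h2 h3; apply: N; by exists d'.
Qed.

Lemma pow_r m : absGal L (powf t0 m) -> r (powf t0 m) = (g ^+ m)%g.
Proof.
move=> Hm; case: (posnP m) => [->|m0]; first by rewrite expg0 r_id.
have [d Hd] := exists_order m0 Hm.
have [d0 dL dmin] := Hd.
have Hgd := Hpow Hd.
have em := divn_eq m d.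
set q := (m %/ d)%N in em; set rr := (m %% d)%N in em.
have rr0 : rr = 0%N.
  apply/eqP; rewrite -leqn0 leqNgt; apply/negP => rp.
  apply: (dmin rr rp); first by rewrite ltn_pmod.
  apply: absGal_fix; first exact: (pure_abs (powf_abs rr Ht0)).
  move=> x Lx.
  have [_ _ _ _ fq] := absL_qd q dL.
  have [_ _ _ _ fm] := Hm.
  by rewrite -{1}(fq x Lx) -powfD addnC -em fm.
rewrite em rr0 addn0 r_qd // Hgd -expgM mulnC.
done.
Qed.

Lemma conj_pow j u : absGal L u ->
  absGal L (powf t0 j \o u \o powf t0i j) /\
  r (powf t0 j \o u \o powf t0i j) = (g ^+ j * r u * (g ^+ j)^-1)%g.
Proof.
move=> Hu; elim: j => [|j [IH1 IH2]].
  by split => //; rewrite expg0 mul1g invg1 mulg1.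
set v := powf t0 j \o u \o powf t0i j in IH1 IH2.
have -> : powf t0 j.+1 \o u \o powf t0i j.+1 = t0 \o v \o t0i.
  apply: functional_extensionality => x; rewrite /v; change (powf t0 j.+1 (u (powf t0i j.+1 x)) = t0 (powf t0 j (u (powf t0i j (t0i x))))); by rewrite [powf t0i _ _]powfSr.
have Hw : absGal L (t0 \o v \o t0i).
  apply: absGal_fix.
    apply: absGal_comp; last exact: pure_abs t0i_abs.
    by apply: absGal_comp; [exact: pure_abs Ht0 | exact: pure_abs IH1].
  move=> x Lx /=; have [_ _ _ _ fv] := IH1.
  by rewrite fv ?c2 //; apply: Hnorm Lx; exact: t0i_abs.
split => //.
rewrite (Hconj IH1 Hw) ?IH2; last by move=> x /=; rewrite c1.
by rewrite expgS invMg !mulgA.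
Qed.

Definition Pdec t y := exists k s, [/\ absGal L s, t = powf t0 k \o s & y = (g ^+ k * r s)%g].

Lemma Pdec_aux a m s s' : absGal L s -> absGal L s' ->
  powf t0 a \o s = powf t0 (a + m) \o s' -> (g ^+ a * r s = g ^+ (a + m) * r s')%g.
Proof.
move=> Hs Hs' E.
have E1 : forall x, s x = powf t0 m (s' x).
  move=> x; apply: (can_inj (powf_can a c1)).
  by rewrite -powfD; exact: (congr1 (fun f => f x) E).
have [bs' _ _ _ _] := Hs'; case: bs' => s'i d1 d2.
have Hs'i : absGal L s'i := absGal_inv Hs' d1 d2.
have Em : powf t0 m = s \o s'i.
  by apply: functional_extensionality => y /=; rewrite E1 d2.
have HmL : absGal L (powf t0 m) by rewrite Em; exact: absGal_comp.
have Es : s = powf t0 m \o s'.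
  by apply: functional_extensionality => y /=; rewrite E1.
by rewrite Es rhom // pow_r // expgD mulgA.
Qed.

Lemma Pdec_uniq t y y' : Pdec t y -> Pdec t y' -> y = y'.
Proof.
move=> [a [s [Hs Et ->]]] [b [s' [Hs' Et' ->]]].
case: (leqP a b) => ab.
  rewrite -(subnKC ab); apply: Pdec_aux => //; by rewrite subnKC // -Et -Et'.
symmetry; rewrite -(subnKC (ltnW ab)); apply: Pdec_aux => //.
by rewrite subnKC ?(ltnW ab) // -Et -Et'.
Qed.

Definition Rx t := epsilon (inhabits 1%g) (Pdec t).

Lemma R_spec t k s : absGal L s -> t = powf t0 k \o s -> Rx t = (g ^+ k * r s)%g.
Proof.
move=> Hs Et.
have P : Pdec t (g ^+ k * r s)%g by exists k, s.
apply: Pdec_uniq (P); exact: (epsilon_spec (inhabits 1%g) (Pdec t) (ex_intro _ _ P)).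
Qed.

Lemma dec_with t k : absGal K t -> (forall x, L x -> t x = powf t0 k x) ->
  absGal L (powf t0i k \o t) /\ t = powf t0 k \o (powf t0i k \o t).
Proof.
move=> Ht Hk; split.
  apply: absGal_fix; first by apply: absGal_comp; [exact: pure_abs (powf_abs k t0i_abs) | exact: pure_abs Ht].
  by move=> x Lx /=; rewrite Hk // powf_can.
by apply: functional_extensionality => x /=; rewrite powf_can.
Qed.

Lemma dec t : absGal K t -> exists k s, absGal L s /\ t = powf t0 k \o s.
Proof.
move=> Ht; have [k Hk] := Hgen Ht.
have [H1 H2] := dec_with Ht Hk; by exists k, (powf t0i k \o t).
Qed.

Lemma R_ext s : absGal L s -> Rx s = r s.
Proof.
move=> Hs; rewrite (R_spec (k := 0) Hs) ?expg0 ?mul1g //.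
Qed.

Lemma R_hom : is_hom K Rx.
Proof.
move=> t t' Ht Ht'.
have [k [s [Hs Et]]] := dec Ht.
have [k' [s' [Hs' Et']]] := dec Ht'.
set u := powf t0i k' \o s \o powf t0 k'.
have Hu : absGal L u.
  apply: absGal_fix.
    apply: absGal_comp; last exact: pure_abs (powf_abs k' Ht0).
    by apply: absGal_comp; [exact: pure_abs (powf_abs k' t0i_abs) | exact: pure_abs Hs].
  move=> x Lx; rewrite /u /=; have [_ _ _ _ fs] := Hs.
  rewrite fs ?powf_can //; apply: Hnorm Lx; exact: powf_abs.
have [_ Hru] := conj_pow k' Hu.
have Esu : powf t0 k' \o u \o powf t0i k' = s.
  by apply: functional_extensionality => x; rewrite /u /= !powf_can.
rewrite Esu in Hru.
have Ett : t \o t' = powf t0 (k + k') \o (u \o s').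
  apply: functional_extensionality => x; rewrite Et Et' /u /= powfD powf_can //.
rewrite (R_spec (absGal_comp Hu Hs') Ett) (R_spec Hs Et) (R_spec Hs' Et').
by rewrite rhom // Hru expgD !mulgA mulgKV.
Qed.

Lemma R_cont : is_cont L r -> number_field L -> is_cont K Rx.
Proof.
move=> [S0 HS0] [_ [n [b [Hb Hspan]]]].
exists (S0 ++ [seq b i | i <- enum 'I_n]) => t t' Ht Ht' Heq.
have [k [s [Hs Et]]] := dec Ht.
have Hbi : forall i, t (b i) = t' (b i).
  by move=> i; apply: Heq; rewrite mem_cat; apply/orP; right; apply: map_f; rewrite mem_enum.
have tL : forall x, L x -> t' x = powf t0 k x.
  move=> x Lx.
  have [_ _ _ _ fs] := Hs.
  have tx : t x = powf t0 k x by rewrite Et /= fs.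
  rewrite -tx; have [c ->] := Hspan x Lx.
  have [_ _ mt' _ _] := Ht'; have [_ _ mt _ _] := Ht.
  rewrite (rhsum Ht') (rhsum Ht); apply: eq_bigr => i _.
  by rewrite mt' mt (rhrat Ht) (rhrat Ht') Hbi.
have [Hs'' Et''] := dec_with Ht' tL.
rewrite (R_spec Hs Et) (R_spec Hs'' Et''); congr (_ * _)%g.
apply: HS0 => // x xS /=.
rewrite -Heq; last by rewrite mem_cat xS.
by rewrite Et /= powf_can.
Qed.

Lemma R_det : cyclotomic_det L r -> det_is_cyc g t0 -> cyclotomic_det K Rx.
Proof.
move=> Hr Hg t Ht.
have [k [s [Hs Et]]] := dec Ht.
rewrite (R_spec Hs Et) Et.
apply: (det_mul (K := K)); last exact: Hr.
  exact: powf_abs.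
clear Et; elim: k => [|k IH]; first by rewrite expg0; exact: det_one.
rewrite expgS powfS; exact: (det_mul Ht0).
Qed.

End Main.

Lemma fwd_compat p (K L : algC -> Prop) (r R : (algC -> algC) -> PGL2 p) :
  (forall x, K x -> L x) -> is_hom K R -> (forall s, absGal L s -> R s = r s) ->
  forall t, absGal K t -> conj_by L r t (R t) /\ power_cond L r t (R t).
Proof.
move=> HKL HR Hext t Ht; split.
  move=> s s' Hs Hs' E.
  have HsK := absGal_sub HKL Hs; have Hs'K := absGal_sub HKL Hs'.
  rewrite -!Hext //.
  have E2 : s' \o t = t \o s by apply: functional_extensionality => x; exact: E.
  have := HR _ _ Hs'K Ht; rewrite E2 => H.
  by rewrite -(mulgK (R t) (R s')) -H HR.
move=> d [d0 dL _]; rewrite -Hext //.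
elim: d {d0 dL} => [|d IH].
  have H := HR _ _ (absGal_id K) (absGal_id K).
  by rewrite expg0; apply: (mulgI (R id)); rewrite mulg1 -H.
by rewrite powfS HR ?IH ?expgS //; exact: powf_abs.
Qed.

Theorem lemma1 (p : nat) (K L : algC -> Prop) (r : (algC -> algC) -> PGL2 p) :
  prime p -> (7 <= p)%N ->
  cyclic_galois_ext K L ->
  is_hom L r -> is_cont L r -> cyclotomic_det L r ->
  ((exists R : (algC -> algC) -> PGL2 p,
      [/\ is_hom K R, is_cont K R & forall s, absGal L s -> R s = r s])
   <-> compatible K L r)
  /\
  ((exists R : (algC -> algC) -> PGL2 p,
      [/\ is_hom K R, is_cont K R, cyclotomic_det K R &
          forall s, absGal L s -> R s = r s])
   <-> strongly_compatible K L r).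
Proof.
move=> _ _ [nfK nfL HKL Hnorm [t0 Ht0 Hgen]] rhom rcont rdet.
have [[t0i c1 c2] _ _ _ _] := Ht0.
split; split.
- move=> [R [HR _ Hext]] t Ht; exists (R t); exact: (fwd_compat HKL HR Hext Ht).
- move=> Hc; have [g [Hconj Hpow]] := Hc t0 Ht0.
  exists (Rx L r t0 g); split.
  + by apply: (@R_hom _ _ _ _ _ t0i).
  + by apply: (@R_cont _ _ _ _ _ t0i).
  + move=> s Hs; by apply: (@R_ext _ K _ _ _ t0i).
- move=> [R [HR _ Rd Hext]] t Ht; exists (R t).
  have [h1 h2] := fwd_compat HKL HR Hext Ht; split => //; exact: Rd.
- move=> Hc; have [g [Hconj Hg Hpow]] := Hc t0 Ht0.
  exists (Rx L r t0 g); split.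
  + by apply: (@R_hom _ _ _ _ _ t0i).
  + by apply: (@R_cont _ _ _ _ _ t0i).
  + by apply: (@R_det _ _ _ _ _ t0i).
  + move=> s Hs; by apply: (@R_ext _ K _ _ _ t0i).
Qed.
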